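(* Let $\boldsymbol{\gamma}\ge 0$ be an uplink SINR vector such that $\mathbf{I}-\mathbf{F}(\boldsymbol{\gamma})$ and $\mathbf{I}-\mathbf{H}(\boldsymbol{\gamma})$ are invertible. Then $\boldsymbol{\gamma}$ is feasible, i.e. $0\le p_i(\boldsymbol{\gamma})\le p_i^{\max}$ for all $i\in\mathcal{M}$, if and only if $$0\le \Phi_m(\boldsymbol{\gamma})\le \Phi^{\max}_m(\boldsymbol{\gamma})\quad\text{for all } m\in\mathcal{B},$$ where $\boldsymbol{\Phi}(\boldsymbol{\gamma})=(\mathbf{I}-\mathbf{H}(\boldsymbol{\gamma}))^{-1}\mathbf{N}$ and $\Phi^{\max}_m(\boldsymbol{\gamma})=\min_{i\in\mathcal{M}^{\mathcal{B}}_m}\frac{p_i^{\max}h_{m,i}(\gamma_i+1)}{\gamma_i}$ (terms with $\gamma_i=0$, and the minimum over an empty set, being interpreted as $+\infty$).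
   Context: Uplink cellular model: users $\mathcal{M}=\{1,\dots,M\}$, BSs $\mathcal{B}=\{1,\dots,B\}$; user $i$ served by BS $b_i$, $\mathcal{M}^{\mathcal{B}}_m=\{i:b_i=m\}$. Uplink path gains $h_{m,i}>0$ (user $i$ to BS $m$), noise $N_m>0$ at BS $m$, maximum user powers $p_i^{\max}>0$. $\mathbf{p}(\boldsymbol{\gamma})=(\mathbf{I}-\mathbf{F}(\boldsymbol{\gamma}))^{-1}\mathbf{U}(\boldsymbol{\gamma})$ is the power vector achieving SINR vector $\boldsymbol{\gamma}$, where $U_i=\gamma_iN_{b_i}/h_{b_i,i}$, $F_{ii}=0$, $F_{ij}=\gamma_ih_{b_i,j}/h_{b_i,i}$ ($i\neq j$). With $\theta_i=\gamma_i/(\gamma_i+1)$, the $B\times B$ matrix $\mathbf{H}(\boldsymbol{\gamma})$ has $H_{mm}=\sum_{i\in\mathcal{M}^{\mathcal{B}}_m}\theta_i$ and $H_{mn}=\sum_{i\in\mathcal{M}^{\mathcal{B}}_n}\frac{h_{m,i}}{h_{n,i}}\theta_i$ for $m\ne n$; $\mathbf{N}=(N_1,\dots,N_B)^{\mathrm T}$. *)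

(* Defs.v *)
From HB Require Import structures.
From mathcomp Require Import all_boot all_order all_algebra.
Set Implicit Arguments. Unset Strict Implicit. Unset Printing Implicit Defensive.
Import Order.TTheory GRing.Theory Num.Theory.
Local Open Scope ring_scope.

Section Uplink.
Variables (R : realFieldType) (M B : nat).
(* b i : serving BS of user i;  h m i : path gain from user i to BS m;
   N m : noise at BS m;  gamma i : SINR target of user i. *)
Variables (b : 'I_M -> 'I_B) (h : 'I_B -> 'I_M -> R) (N : 'I_B -> R)
          (gamma : 'I_M -> R).

Definition Umx : 'cV[R]_M := \col_i (gamma i * N (b i) / h (b i) i).

Definition Fmx : 'M[R]_M :=
  \matrix_(i, j) (if i == j then 0 else gamma i * h (b i) j / h (b i) i).

Definition pvec : 'cV[R]_M := invmx (1%:M - Fmx) *m Umx.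

Definition theta (i : 'I_M) : R := gamma i / (gamma i + 1).

Definition Hmx : 'M[R]_B :=
  \matrix_(m, n) (if m == n then \sum_(i | b i == m) theta i
                  else \sum_(i | b i == n) (h m i / h n i) * theta i).

Definition Ncol : 'cV[R]_B := \col_m N m.

Definition Phi : 'cV[R]_B := invmx (1%:M - Hmx) *m Ncol.

(* Extended reals R \cup {+oo}: None stands for +oo. *)
Definition omin (x y : option R) : option R :=
  match x, y with
  | None, _ => y
  | _, None => x
  | Some a, Some c => Some (Num.min a c)
  end.

Definition ole (x y : option R) : bool :=
  match x, y with
  | _, None => true
  | None, Some _ => false
  | Some a, Some c => a <= c
  end.

Definition Phimax (pmax : 'I_M -> R) (m : 'I_B) : option R :=
  \big[omin/None]_(i | b i == m)
     (if gamma i == 0 then None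
      else Some (pmax i * h m i * (gamma i + 1) / gamma i)).

End Uplink.

(* Main.v *)
Require Import Defs.
From HB Require Import structures.
From mathcomp Require Import all_boot all_order all_algebra.
From mathcomp Require Import ring lra.
Import Order.TTheory GRing.Theory Num.Theory.
Local Open Scope ring_scope.

Lemma aux1 (R : realFieldType) (g T h pm : R) : 0 < g -> 0 < h ->
  T <= pm * h * (g + 1) / g -> g / (g + 1) * T / h <= pm.
Proof.
move=> gp hp Hle.
have g1 : 0 < g + 1 by rewrite ltr_wpDl // ltW.
have -> : g / (g + 1) * T / h = T * (g / ((g + 1) * h)).
  by field; rewrite !gt_eqF.
have E : pm = pm * h * (g + 1) / g * (g / ((g + 1) * h)).
  by field; rewrite !gt_eqF.
rewrite [X in _ <= X]E.
apply: ler_wpM2r => //.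
by apply: divr_ge0; [apply: ltW | apply: mulr_ge0; apply: ltW].
Qed.
Lemma aux2 (R : realFieldType) (g T h pm : R) : 0 < g -> 0 < h ->
  g / (g + 1) * T / h <= pm -> T <= pm * h * (g + 1) / g.
Proof.
move=> gp hp Hle.
have g1 : 0 < g + 1 by rewrite ltr_wpDl // ltW.
have -> : T = g / (g + 1) * T / h * (h * (g + 1) / g).
  by field; rewrite !gt_eqF.
have -> : pm * h * (g + 1) / g = pm * (h * (g + 1) / g) by ring.
apply: ler_wpM2r => //.
by apply: divr_ge0; [apply: mulr_ge0; apply: ltW | apply: ltW].
Qed.

Lemma ole_omin (R : realFieldType) (x : R) a c :
  ole (Some x) (omin a c) = ole (Some x) a && ole (Some x) c.
Proof.
case: a => [a|]; case: c => [c|] //=; first by rewrite le_min.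
by rewrite andbT.
Qed.

Lemma ole_big (R : realFieldType) (I : eqType) (x : R) (s : seq I) (P : pred I) f :
  ole (Some x) (\big[@omin R/None]_(i <- s | P i) f i) <->
  (forall i, i \in s -> P i -> ole (Some x) (f i)).
Proof.
elim: s => [|a s IH]; first by rewrite big_nil; split => // _ i.
rewrite big_cons; split.
  case: ifP => Pa.
    rewrite ole_omin => /andP[H1 /IH H2] i; rewrite inE => /orP[/eqP->|] //.
    exact: H2.
  move=> /IH H i; rewrite inE => /orP[/eqP-> |]; [by rewrite Pa | exact: H].
move=> H; have H2 : forall i, i \in s -> P i -> ole (Some x) (f i).
  by move=> i Hi; apply: H; rewrite inE Hi orbT.
case: ifP => Pa; last by apply/IH.
rewrite ole_omin; apply/andP; split; last by apply/IH.
by apply: H => //; rewrite inE eqxx.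
Qed.

Theorem corollary1 (R : realFieldType) (M B : nat)
  (b : 'I_M -> 'I_B) (h : 'I_B -> 'I_M -> R) (N : 'I_B -> R)
  (pmax : 'I_M -> R) (gamma : 'I_M -> R) :
  (forall m i, 0 < h m i) ->
  (forall m, 0 < N m) ->
  (forall i, 0 < pmax i) ->
  (forall i, 0 <= gamma i) ->
  (1%:M - Fmx b h gamma) \in unitmx ->
  (1%:M - Hmx b h gamma) \in unitmx ->
  ((forall i : 'I_M, 0 <= pvec b h N gamma i 0 /\ pvec b h N gamma i 0 <= pmax i)
   <->
   (forall m : 'I_B, 0 <= Phi b h N gamma m 0 /\
      ole (Some (Phi b h N gamma m 0)) (Phimax b h gamma pmax m))).
Proof.
move=> hpos Npos ppos gpos Fu Hu.
set p := pvec b h N gamma.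
have hp : (1%:M - Fmx b h gamma) *m p = Umx b h N gamma.
  by rewrite /p /pvec mulKVmx.
clearbody p.
set T : 'cV[R]_B := \col_m (N m + \sum_j h m j * p j 0).
have hne : forall m i, h m i != 0 by move=> m i; rewrite gt_eqF.
have gne : forall i, gamma i + 1 != 0.
  by move=> i; rewrite gt_eqF // ltr_wpDl.
have pT : forall i, p i 0 = theta gamma i * T (b i) 0 / h (b i) i.
  move=> i.
  move/matrixP: (hp) => /(_ i 0).
  rewrite mulmxBl mul1mx !mxE.
  rewrite (bigD1 i) //= !mxE eqxx mul0r add0r.
  under eq_bigr => j /negbTE ji do rewrite mxE eq_sym ji.
  set S := \sum_(j | j != i) h (b i) j * p j 0.
  have -> : \sum_(j | j != i) gamma i * h (b i) j / h (b i) i * p j 0 =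
            gamma i / h (b i) i * S.
    by rewrite mulr_sumr; apply: eq_bigr => j _; ring.
  move=> E.
  rewrite (bigD1 i) //= -/S /theta.
  have E2 : p i 0 = gamma i * N (b i) / h (b i) i + gamma i / h (b i) i * S.
    by rewrite -E; ring.
  rewrite E2; field.
  by rewrite hne gne.
have TPhi : T = Phi b h N gamma.
  rewrite /Phi; apply: (canRL (mulKmx Hu)) => /=; symmetry.
  apply/matrixP => m k; rewrite (ord1 k).
  rewrite mulmxBl mul1mx !mxE.
  have -> : \sum_n Hmx b h gamma m n * T n 0 = \sum_j h m j * p j 0.
    have HE : forall n, Hmx b h gamma m n =
        \sum_(i | b i == n) h m i / h n i * theta gamma i.
      move=> n; rewrite mxE; case: eqP => // ->.
      by apply: eq_bigr => i _; rewrite divff // mul1r.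
    under eq_bigr => n _ do rewrite HE mulr_suml.
    rewrite [RHS](partition_big b xpredT) //=.
    apply: eq_bigr => n _; apply: eq_bigr => j /eqP <-.
    rewrite pT; field; exact: hne.
  ring.
rewrite -TPhi.
have T0 : forall m, 0 <= T m 0 ->
   (forall i, 0 <= p i 0) -> True by [].
split.
  move=> Hf m.
  have Tm : 0 <= T m 0.
    rewrite mxE; apply: addr_ge0; first exact: ltW.
    by apply: sumr_ge0 => j _; apply: mulr_ge0; [exact: ltW | case: (Hf j)].
  split => //.
  rewrite /Phimax; apply/ole_big => i _ /eqP bi.
  case: eqP => // /eqP g0 /=.
  have [_ Hle] := Hf i.
  rewrite pT /theta in Hle.
  have gp : 0 < gamma i by rewrite lt0r g0 gpos.
  have hp0 := hpos (b i) i.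
  by rewrite -bi; apply: aux2.
move=> Hr i.
have [Tm Hm] := Hr (b i).
have hp0 := hpos (b i) i.
have gp1 : 0 < gamma i + 1 by rewrite ltr_wpDl.
have th0 : 0 <= theta gamma i by rewrite /theta divr_ge0 // ltW.
rewrite pT; split.
  by apply: divr_ge0; [apply: mulr_ge0 | exact: ltW].
case: (eqVneq (gamma i) 0) => g0.
  by rewrite /theta g0 !mul0r ltW.
have gp : 0 < gamma i by rewrite lt0r g0 gpos.
move: Hm; rewrite /Phimax => /ole_big /(_ i (mem_index_enum _) (eqxx _)).
rewrite (negbTE g0) /= => Hle.
  by apply: aux1.
Qed.
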